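(* Let $\mathcal{R}$ be a right amenable cell space with finite stabiliser $G_0$, let $(\mathcal{R},Q,N,\delta)$ be a semi-cellular automaton with $Q$ finite and nonempty and $N$ finite, with global transition function $\Delta$, and let $\mathcal{F}=(F_i)_{i\in I}$ be a right Følner net in $\mathcal{R}$. Then for every subset $X\subseteq Q^M$ we have $\mathrm{h}_{\mathcal{F}}(\Delta(X))\leq\mathrm{h}_{\mathcal{F}}(X)$.
   Context: A cell space $\mathcal{R}$ consists of a group $G$ acting transitively on the left on a nonempty set $M$ via $\triangleright$, a point $m_0\in M$ and a family $(g_{m_0,m})_{m\in M}$ in $G$ with $g_{m_0,m}\triangleright m_0=m$. $G_0$ is the stabiliser of $m_0$, $G/G_0$ the set of left cosets, with $G$ acting by $g\cdot hG_0=ghG_0$. The right semi-action $\triangleleft\colon M\times G/G_0\to M$ is $m\triangleleft gG_0=g_{m_0,m}g\triangleright m_0$. $\mathcal{R}$ is right amenable if there is a finitely additive probability measure $\mu$ on the power set of $M$ such that $\mu(\{a\triangleleft\mathfrak{g}:a\in A\})=\mu(A)$ whenever $\mathfrak{g}\in G/G_0$, $A\subseteq M$ and $m\mapsto m\triangleleft\mathfrak{g}$ is injective on $A$. A right Følner net in $\mathcal{R}$ is a net $(F_i)_{i\in I}$ (over a directed set) of nonempty finite subsets of $M$ with $\lim_{i}\frac{|F_i\setminus\{m: m\triangleleft\mathfrak{g}\in F_i\}|}{|F_i|}=0$ for every $\mathfrak{g}\in G/G_0$. A semi-cellular automaton is $(\mathcal{R},Q,N,\delta)$ with $Q$ a set,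 $N\subseteq G/G_0$ with $G_0\cdot N\subseteq N$, $\delta\colon Q^N\to Q$; its global transition function is $\Delta\colon Q^M\to Q^M$, $\Delta(c)(m)=\delta(n\mapsto c(m\triangleleft n))$. For $A\subseteq M$, $\pi_A\colon Q^M\to Q^A$ is restriction. For $X\subseteq Q^M$ and a net $\mathcal{F}=(F_i)_{i\in I}$ of nonempty finite subsets of $M$, the entropy is $\mathrm{h}_{\mathcal{F}}(X)=\limsup_{i\in I}\frac{\log|\pi_{F_i}(X)|}{|F_i|}$. *)

(* Defs.v *)
From HB Require Import structures.
From mathcomp Require Import all_boot all_order all_algebra monoid.
From mathcomp Require Import finmap.
From mathcomp Require Import all_classical all_reals ereal exp.
Local Open Scope ereal_scope.
From Stdlib Require Import Rdefinitions.
From mathcomp Require Import Rstruct.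
Set Implicit Arguments. Unset Strict Implicit. Unset Printing Implicit Defensive.
Import Order.TTheory GRing.Theory Num.Theory.
Local Open Scope ring_scope.
Local Open Scope classical_set_scope.


(* A cell space: a group G acting transitively on the left on the nonempty
   set M via act, a point m0 and coordinates g_{m0,m} with g_{m0,m} |> m0 = m.
   (Transitivity follows from the existence of the family gsel; nonemptiness
   from m0.) *)
Record cell_space (G : groupType) (M : Type) := CellSpace {
  act : G -> M -> M;
  act1 : forall m, act 1%g m = m;
  actM : forall g h m, act (g * h)%g m = act g (act h m);
  act_transitive : forall m m', exists g, act g m = m';
  origin : M;
  coord : M -> G;
  coordP : forall m, act (coord m) origin = m
}.

Section CellSpaceDefs.
Context (G : groupType) (M : Type) (R : cell_space G M).

Definition stab : set G := [set g | act R g (origin R) = origin R].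

Definition lcoset (g : G) : set G := [set (g * h)%g | h in stab].

Definition coset_space := {A : set G | exists g, A = lcoset g}.

Definition coset_repr (A : coset_space) : G := projT1 (cid (proj2_sig A)).

Definition coset_lact (g : G) (A : set G) : set G := [set (g * a)%g | a in A].

Definition rsact (m : M) (A : coset_space) : M :=
  act R (coord R m * coset_repr A)%g (origin R).

End CellSpaceDefs.
Arguments rsact {G M} R m A.
Arguments coset_repr {G M} R A.

Definition right_amenable (G : groupType) (M : Type) (R : cell_space G M) : Prop :=
  exists mu : set M -> Rdefinitions.R,
    [/\ (forall A, (0 <= mu A)%R),
        mu setT = 1%R,
        (forall A B, A `&` B = set0 -> mu (A `|` B) = (mu A + mu B)%R) &
        (forall (g : coset_space R) (A : set M),
            {in A &, injective (fun m => rsact R m g)} ->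
            mu [set rsact R a g | a in A] = mu A)].

Definition directed (I : Type) (le : I -> I -> Prop) : Prop :=
  [/\ inhabited I,
      (forall i, le i i),
      (forall i j k, le i j -> le j k -> le i k) &
      (forall i j, exists k, le i k /\ le j k)].

Definition net_to_0 (I : Type) (le : I -> I -> Prop) (x : I -> Rdefinitions.R) : Prop :=
  forall eps : Rdefinitions.R, (0 < eps)%R ->
    exists i0, forall i, le i0 i -> (`|x i| < eps)%R.

Definition net_limsup (I : Type) (le : I -> I -> Prop) (x : I -> Rdefinitions.R)
  : \bar Rdefinitions.R :=
  ereal_inf [set ereal_sup [set (x j)%:E | j in [set j | le i j]] | i in setT].

Definition right_folner_net (G : groupType) (M : choiceType) (R : cell_space G M)
  (I : Type) (le : I -> I -> Prop) (F : I -> {fset M}) : Prop :=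
  directed le /\
  (forall i, F i != fset0%fset) /\
  (forall g : coset_space R,
     net_to_0 le (fun i =>
       (#|` [fset m in F i | rsact R m g \notin F i]%fset|%:R / #|` F i|%:R)%R)).

Definition global_transition (G : groupType) (M : Type) (R : cell_space G M)
  (Q : Type) (N : set (coset_space R)) (delta : ({n | N n} -> Q) -> Q)
  (c : M -> Q) : M -> Q :=
  fun m => delta (fun n => c (rsact R m (proj1_sig n))).

Definition stab_invariant (G : groupType) (M : Type) (R : cell_space G M)
  (N : set (coset_space R)) : Prop :=
  forall g n, stab R g -> N n ->
    exists n', N n' /\ proj1_sig n' = coset_lact g (proj1_sig n).

Definition restr_set (M : choiceType) (Q : finType) (F : {fset M})
  (X : set (M -> Q)) : {set {ffun F -> Q}} :=
  [set p : {ffun F -> Q} | `[< exists2 c, X c & p = [ffun x : F => c (fsval x)] >]].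

Definition entropy (M : choiceType) (Q : finType) (I : Type) (le : I -> I -> Prop)
  (F : I -> {fset M}) (X : set (M -> Q)) : \bar Rdefinitions.R :=
  net_limsup le (fun i =>
    (ln (#|restr_set (F i) X|%:R) / #|` F i|%:R)%R).

(* Main.v *)
Require Import Defs.
From HB Require Import structures.
From mathcomp Require Import all_boot all_order all_algebra monoid.
From mathcomp Require Import finmap.
From mathcomp Require Import all_classical all_reals ereal exp.
From Stdlib Require Import Rdefinitions.
From mathcomp Require Import Rstruct.
Import Order.TTheory GRing.Theory Num.Theory.
Local Open Scope ereal_scope.
Local Open Scope classical_set_scope.
Definition eqT (T : Type) : Type := T.
HB.instance Definition _ (T : Type) := gen_eqMixin (eqT T).

Section Helpers.
Set Implicit Arguments. Unset Strict Implicit. Unset Printing Implicit Defensive.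
Local Open Scope ring_scope.
Notation rl := Rdefinitions.R.

Definition nto0 (I : Type) (le : I -> I -> Prop) (x : I -> rl) : Prop :=
  forall eps : rl, 0 < eps -> exists i0, forall i, le i0 i -> `|x i| < eps.

Lemma nto0E (I : Type) (le : I -> I -> Prop) (x : I -> rl) :
  net_to_0 le x -> nto0 le x.
Proof.
move=> h eps /RltP e0; have [i0 hi] := h eps e0; exists i0 => i /hi.
by move/RltP.
Qed.

Lemma limsup_le (I : Type) (le : I -> I -> Prop) (a b e : I -> rl) :
  directed le -> (forall j, (a j <= b j + e j)) -> nto0 le e ->
  (net_limsup le a <= net_limsup le b)%E.
Proof.
move=> [_ _ trans ub] hab he.
apply: le_ereal_inf_tmp => _ [i _ <-].
apply/lee_addgt0Pr => eps eps0.
have [i0 hi0] := he eps eps0.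
have [k [hik hi0k]] := ub i i0.
apply: (@le_trans _ _ (ereal_sup [set (a j)%:E | j in [set j | le k j]])).
  by apply: ereal_inf_lbound; exists k.
apply: ge_ereal_sup => _ [j hkj <-].
have h : (a j <= b j + eps).
  apply: (le_trans (hab j)); rewrite lerD2l.
  exact: le_trans (ler_norm _) (ltW (hi0 j (trans _ _ _ hi0k hkj))).
rewrite -lee_fin EFinD in h; apply: (le_trans h); apply: leeD2r.
by apply: ereal_sup_ubound; exists j => //; apply: trans hik hkj.
Qed.

Lemma net_sum0 (I : Type) (le : I -> I -> Prop) (T : Type) (s : seq T)
  (t : T -> I -> rl) : directed le -> (forall n, nto0 le (t n)) ->
  nto0 le (fun i => (\sum_(n <- s) t n i)).
Proof.
move=> [[i1] _ trans ub] ht; elim: s => [|n s IH] eps eps0.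
  by exists i1 => i _; rewrite big_nil normr0.
have e2 : (0 < eps / 2) by rewrite divr_gt0.
have [i2 h2] := IH _ e2; have [i3 h3] := ht n _ e2.
have [k [hk2 hk3]] := ub i2 i3.
exists k => i hki; rewrite big_cons.
apply: (le_lt_trans (ler_normD _ _)).
rewrite [eps](splitr eps).
by apply: ltrD; [apply: h3 | apply: h2]; apply: trans hki.
Qed.

Lemma count_bound (G : groupType) (M : choiceType) (R : cell_space G M)
  (Q : finType) (q0 : Q) (N : set (coset_space R))
  (s : seq (eqT (coset_space R))) (hs : forall n, N n -> n \in s)
  (delta : ({n | N n} -> Q) -> Q) (F : {fset M}) (X : set (M -> Q)) :
  (#|restr_set F (global_transition delta @` X)| <=
   #|restr_set F X| * expn #|Q| (\sum_(n <- s) #|` [fset m in F | rsact R m n \notin F]%fset|))%nat.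
Proof.
set A := fun n => [fset m in F | rsact R m n \notin F]%fset.
set D := \big[fsetU/fset0]_(n <- s) [fset rsact R m n | m in A n]%fset.
have hD : (#|` D| <= \sum_(n <- s) #|` A n|)%nat.
  rewrite /D; elim: (s) => [|n s' IH]; first by rewrite !big_nil cardfs0.
  rewrite !big_cons; apply: leq_trans (leq_card_fsetU _ _).1 _; apply: leq_add => //.
  exact: leq_imfset_card.
have memD : forall (x : F) (n : {n | N n}), rsact R (val x) (proj1_sig n) \notin F ->
    rsact R (val x) (proj1_sig n) \in D.
  move=> x [n Nn] /= hn; have := hs n Nn; rewrite /D.
  elim: (s) => // n' s' IH; rewrite big_cons in_fsetU => /orP [/eqP <- | /IH ->];
    last by rewrite orbT.
  apply/orP; left; apply/imfsetP; exists (val x) => //.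
  by rewrite !inE (fsvalP x) /= hn.
pose v (p : {ffun F -> Q}) (r : {ffun D -> Q}) (y : M) : Q :=
  match (insub y : option F) with Some z => p z | None =>
    match (insub y : option D) with Some z => r z | None => q0 end end.
pose g (pr : {ffun F -> Q} * {ffun D -> Q}) : {ffun F -> Q} :=
  [ffun x : F => delta (fun n => v pr.1 pr.2 (rsact R (val x) (proj1_sig n)))].
have sub : restr_set F (global_transition delta @` X) \subset
    g @: finset.setX (restr_set F X) [set: {ffun D -> Q}].
  apply/fintype.subsetP => p; rewrite inE => /asboolP [c' [c Xc <-] ->].
  apply/imsetP; exists ([ffun x : F => c (val x)], [ffun x : D => c (val x)]).
    rewrite finset.in_setX finset.in_setT andbT inE; apply/asboolP; by exists c.
  apply/ffunP => x; rewrite !ffunE /global_transition /=; congr delta; apply: funext => n.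
  rewrite /v; case: insubP => [z _ hz|hF]; first by rewrite ffunE hz.
  case: insubP => [z _ hz|hD']; first by rewrite ffunE hz.
  by rewrite memD in hD'.
apply: leq_trans (subset_leq_card sub) _.
apply: leq_trans (leq_imset_card _ _) _.
rewrite finset.cardsX finset.cardsT card_ffun.
have q0' : (0 < #|Q|)%nat by apply/card_gt0P; exists q0.
apply: leq_mul => //; apply: leq_pexp2l => //.
by rewrite -cardfE.
Qed.

Lemma lnn_ge0 (n : nat) : 0 <= ln (n%:R : rl).
Proof.
case: n => [|n]; first by rewrite ln0.
by apply: ln_ge0; rewrite ler1n.
Qed.

Lemma real_step (a b q S f : nat) : (0 < f)%nat -> (0 < q)%nat ->
  (a <= b * expn q S)%nat ->
  ln (a%:R : rl) / f%:R <= ln (b%:R : rl) / f%:R + ln (q%:R : rl) * (S%:R / f%:R).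
Proof.
move=> f0 q0 hab.
have f0' : 0 < (f%:R : rl)^-1 by rewrite invr_gt0 ltr0n.
rewrite mulrA -mulrDl; apply: ler_wpM2r; first exact: ltW.
case: a hab => [|a] hab; first by rewrite ln0 ?ler0n // addr_ge0 ?lnn_ge0 // mulr_ge0 ?lnn_ge0.
have b0 : (0 < b)%nat by case: b hab.
have qS0 : (0 < expn q S)%nat by rewrite expn_gt0 q0.
apply: (@le_trans _ _ (ln ((b * expn q S)%:R : rl))).
  by rewrite ler_ln ?posrE ?ltr0n ?muln_gt0 ?b0 // ler_nat.
rewrite natrM lnM ?posrE ?ltr0n // natrX lnXn ?ltr0n //.
by rewrite mulr_natr.
Qed.

Lemma fin_list (T : Type) (A : set T) : finite_set A ->
  exists s : seq (eqT T), forall x, A x -> x \in s.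
Proof. move=> /(@finite_seqP (eqT T)) [s ->]. by exists s. Qed.

Lemma theorem3_aux
  (G : groupType) (M : choiceType) (R : cell_space G M)
  (hR : right_amenable R) (hG0 : finite_set (stab R))
  (Q : finType) (hQ : (0 < #|Q|)%nat)
  (N : set (coset_space R)) (hN : finite_set N) (hN0 : stab_invariant N)
  (delta : ({n | N n} -> Q) -> Q)
  (I : Type) (le : I -> I -> Prop) (F : I -> {fset M})
  (hF : right_folner_net R le F)
  (X : set (M -> Q)) :
  (entropy le F (global_transition delta @` X) <= entropy le F X)%E.
Proof.
move: hF => [hdir [hne hfol]].
have [q0 _] : exists q : Q, q \in Q by apply/card_gt0P.
have [s hs] := fin_list hN.
pose t := fun n i => (#|` [fset m in F i | rsact R m n \notin F i]%fset|%:R / #|` F i|%:R : rl).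
rewrite /entropy.
apply: (@limsup_le _ _ _ _ (fun i => ln (#|Q|%:R : rl) * \sum_(n <- s) t n i)) => //.
  move=> j; rewrite /t -mulr_suml -natr_sum.
  apply: real_step => //; first by rewrite cardfs_gt0.
  exact: (count_bound q0 hs).
move=> eps e0.
have lq := lnn_ge0 #|Q|.
have lq1 : 0 < ln (#|Q|%:R : rl) + 1 by rewrite ltr_wpDl.
have e1 : 0 < eps / (ln (#|Q|%:R : rl) + 1) by rewrite divr_gt0.
have [i0 hi] := net_sum0 s hdir (fun n => nto0E (hfol n)) e1.
exists i0 => i /hi h.
rewrite normrM ger0_norm //.
apply: (@le_lt_trans _ _ ((ln (#|Q|%:R : rl) + 1) * `|\sum_(n <- s) t n i|)).
  by apply: ler_wpM2r => //; rewrite lerDl.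
by rewrite mulrC -ltr_pdivlMr.
Qed.

End Helpers.

Theorem theorem3
  (G : groupType) (M : choiceType) (R : cell_space G M)
  (hR : right_amenable R) (hG0 : finite_set (stab R))
  (Q : finType) (hQ : (0 < #|Q|)%nat)
  (N : set (coset_space R)) (hN : finite_set N) (hN0 : stab_invariant N)
  (delta : ({n | N n} -> Q) -> Q)
  (I : Type) (le : I -> I -> Prop) (F : I -> {fset M})
  (hF : right_folner_net R le F)
  (X : set (M -> Q)) :
  entropy le F (global_transition delta @` X) <= entropy le F X.
Proof. exact: theorem3_aux. Qed.
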